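(* Let $D>1$ be a square-free integer with $-D\equiv 2$ or $3 \pmod 4$, and suppose the form class group $C(-4D)$ (the class group of $\mathbb{Q}[\sqrt{-D}]$) is a free $\mathbb{Z}_2$-module, i.e. $C(-4D)\cong(\mathbb{Z}/2\mathbb{Z})^n$ for some $n\ge 0$. Then $G_D(\mathbb{Q})=U\times F$, where $U=\{\pm1\}$ and $F$ is a free abelian group. Moreover, let $c=p_1^{n_1}\cdots p_k^{n_k}$ with $p_1,\dots,p_k$ distinct primes and $n_i\ge 1$. If $\left(\frac{-D}{p_i}\right)=1$ for all $1\le i\le k$, then the number of normalized solutions of the form $(a,b,c)$ to $x^2+Dy^2=z^2$ is $2^{k-1}$. Otherwise, there are no normalized solutions of the form $(a,b,c)$.
   Context: $G_D(\mathbb{Q}):=\{a+b\sqrt{-D}\in\mathbb{Q}[\sqrt{-D}]: a,b\in\mathbb{Q},\ a^2+Db^2=1\}$, a group under multiplication of complex numbers. A normalized solution of $x^2+Dy^2=z^2$ is a triple $(a,b,c)$ of natural numbers with $a^2+Db^2=c^2$ and $\gcd(a,b,c)=1$. $C(-4D)$ denotes the set of $\mathrm{SL}_2(\mathbb{Z})$-equivalence classes of primitive positive-definite binary quadratic forms $ax^2+bxy+cy^2$ of discriminant $b^2-4ac=-4D$, a group under Dirichlet composition. $\left(\frac{\cdot}{p}\right)$ is the Legendre symbol (for odd primes $p$). *)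

(* Defs.v *)
From mathcomp Require Import all_boot all_order all_algebra.
Set Implicit Arguments. Unset Strict Implicit. Unset Printing Implicit Defensive.
Import Order.TTheory GRing.Theory Num.Theory.
Local Open Scope ring_scope.

Definition squarefree (n : nat) : Prop :=
  forall p : nat, prime p -> ~~ (p * p %| n)%N.

(* ---------- Legendre symbol (a / p), meaningful for odd primes p ---------- *)
Definition legendre (a : int) (p : nat) : int :=
  if (p%:Z %| a)%Z then 0
  else if [exists x : 'I_p, ((x%:Z) ^+ 2 == a %[mod p%:Z])%Z] then 1 else -1.

(* a + b sqrt(-D) is represented by the pair (a, b) of rationals. *)
Definition inGD (D : nat) (x : rat * rat) : Prop :=
  x.1 ^+ 2 + D%:R * x.2 ^+ 2 = 1.

(* multiplication of complex numbers (a + b sqrt(-D))(c + d sqrt(-D)) *)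
Definition gmul (D : nat) (x y : rat * rat) : rat * rat :=
  (x.1 * y.1 - D%:R * x.2 * y.2, x.1 * y.2 + x.2 * y.1).

Definition gone : rat * rat := (1, 0).
Definition gneg1 : rat * rat := (-1, 0).

(* inverse of a norm-one element: its conjugate *)
Definition ginv (x : rat * rat) : rat * rat := (x.1, - x.2).

Definition gpow (D : nat) (x : rat * rat) (z : int) : rat * rat :=
  match z with
  | Posz n => iter n (gmul D x) gone
  | Negz n => iter n.+1 (gmul D (ginv x)) gone
  end.

Definition gprod (D : nat) (s : seq ((rat * rat) * int)) : rat * rat :=
  foldr (fun p acc => gmul D (gpow D p.1 p.2) acc) gone s.

Definition in_span (D : nat) (B : rat * rat -> Prop) (y : rat * rat) : Prop :=
  exists s : seq ((rat * rat) * int),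
    (forall p, p \in s -> B p.1) /\ y = gprod D s.

Definition independent (D : nat) (B : rat * rat -> Prop) : Prop :=
  forall (s : seq (rat * rat)) (z : rat * rat -> int),
    uniq s -> (forall x, x \in s -> B x) ->
    gprod D [seq (x, z x) | x <- s] = gone ->
    forall x, x \in s -> z x = 0.

Definition inU (u : rat * rat) : Prop := u = gone \/ u = gneg1.

Definition GD_is_U_times_free (D : nat) : Prop :=
  exists B : rat * rat -> Prop,
    (forall x, B x -> inGD D x) /\
    independent D B /\
    (forall g, inGD D g ->
       exists u y, inU u /\ in_span D B y /\ g = gmul D u y) /\
    (forall u u' y y', inU u -> inU u' -> in_span D B y -> in_span D B y' ->
       gmul D u y = gmul D u' y' -> u = u' /\ y = y').

Definition normalized_sol (D : nat) (a b c : nat) : bool :=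
  (a ^ 2 + D * b ^ 2 == c ^ 2)%N && (gcdn (gcdn a b) c == 1)%N.

Definition qform := (int * int * int)%type.
Definition fa (f : qform) : int := f.1.1.
Definition fb (f : qform) : int := f.1.2.
Definition fc (f : qform) : int := f.2.

Definition feval (f : qform) (x y : int) : int :=
  fa f * x ^+ 2 + fb f * x * y + fc f * y ^+ 2.

Definition disc (f : qform) : int := fb f ^+ 2 - 4 * fa f * fc f.

Definition primitive_form (f : qform) : bool :=
  gcdz (gcdz (fa f) (fb f)) (fc f) == 1.

Definition posdef (f : qform) : bool := (0 < fa f) && (disc f < 0).

Definition form_equiv (f g : qform) : Prop :=
  exists p q r s : int, p * s - q * r = 1 /\
    forall x y : int, feval g x y = feval f (p * x + q * y) (r * x + s * y).

(* Dirichlet composition (Cox, Lemma 3.2): for f = (a,b,c), g = (a',b',c') of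
   the same discriminant Delta with gcd(a, a', (b+b')/2) = 1, the composite is
   (a a', B, (B^2 - Delta)/(4 a a')) where B = b mod 2a, B = b' mod 2a',
   B^2 = Delta mod 4aa'. *)
Definition dirichlet_composite (f g h : qform) : Prop :=
  disc f = disc g /\
  (2 %| fb f + fb g)%Z /\
  gcdz (gcdz (fa f) (fa g)) ((fb f + fb g) %/ 2)%Z = 1 /\
  fa h = fa f * fa g /\
  (fb h == fb f %[mod 2 * fa f])%Z /\
  (fb h == fb g %[mod 2 * fa g])%Z /\
  disc h = disc f.

Definition principal_form (D : nat) : qform := (1, 0, D%:Z).

Definition form_of_disc (Delta : int) (f : qform) : bool :=
  [&& primitive_form f, posdef f & disc f == Delta].

(* C(Delta) is an elementary abelian 2-group: the square (under Dirichlet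
   composition) of every class is the principal class. *)
Definition class_group_elem_2 (D : nat) : Prop :=
  forall f g h : qform,
    form_of_disc (- 4 * D%:Z) f -> form_of_disc (- 4 * D%:Z) g ->
    form_equiv f g -> dirichlet_composite f g h ->
    form_equiv (principal_form D) h.

(* Main.v *)
Require Import Defs.
From mathcomp Require Import all_boot all_order all_algebra.
From mathcomp Require Import ring lra zify.
Set Implicit Arguments. Unset Strict Implicit. Unset Printing Implicit Defensive.
Import Order.TTheory GRing.Theory Num.Theory.
Local Open Scope ring_scope.

Lemma dvdzPM (p : nat) (x y : int) : prime p ->
  (p%:Z %| x * y)%Z = (p%:Z %| x)%Z || (p%:Z %| y)%Z.
Proof. by move=> pp; rewrite !dvdzE abszM Euclid_dvdM. Qed.

Lemma dvdzX2 (p : nat) (x : int) : prime p -> (p%:Z %| x ^+ 2)%Z = (p%:Z %| x)%Z.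
Proof. by move=> pp; rewrite expr2 dvdzPM // orbb. Qed.

Lemma nocommon (a b : nat) : (0 < a)%N ->
  (forall q, prime q -> (q %| a)%N -> (q %| b)%N -> False) -> coprime a b.
Proof.
move=> a0 H; rewrite /coprime; case: (ltngtP (gcdn a b) 1) => // h.
  by move: h; rewrite ltnS leqn0 => /eqP g0; have := gcdn_gt0 a b; rewrite g0 a0.
case: (pdivP h) => q pq qd; exfalso; apply: (H q pq).
  exact: dvdn_trans qd (dvdn_gcdl _ _).
exact: dvdn_trans qd (dvdn_gcdr _ _).
Qed.


Lemma coprimez_primeP (p : nat) (x : int) : prime p ->
  coprimez p%:Z x = ~~ (p%:Z %| x)%Z.
Proof. by move=> pp; rewrite coprimezE /= prime_coprime. Qed.

Lemma eq_lc (R : comRingType) (a b l r k : R) : l = r -> a - b = k * (l - r) -> a = b.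
Proof. by move=> -> h; apply/eqP; rewrite -subr_eq0 h subrr mulr0. Qed.

Lemma not_mul_le (q g : nat) : (1 < q)%N -> (0 < g)%N -> (q * g <= g)%N -> False.
Proof. nia. Qed.

Lemma natsol_arith (a2 X b2 p2 : nat) : (a2 + X = p2)%N -> (p2 <= b2)%N -> (2 * b2 <= X)%N ->
  (0 < p2)%N -> False.
Proof. lia. Qed.

Lemma pow_eq1 (p k : nat) : (1 < p)%N -> (p ^ k == 1)%N -> k = 0%N.
Proof.
move=> h; case: k => // k; rewrite expnS muln_eq1 => /andP[/eqP p1 _].
by rewrite p1 in h.
Qed.

Fixpoint blists (n : nat) : seq (seq bool) :=
  if n is n'.+1 then [seq true :: v | v <- blists n'] ++ [seq false :: v | v <- blists n']
  else [:: [::]].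

Lemma size_blists n : size (blists n) = (2 ^ n)%N.
Proof. by elim: n => [|n IH] //=; rewrite size_cat !size_map IH expnS mul2n addnn. Qed.

Lemma mem_blists n v : (v \in blists n) = (size v == n).
Proof.
elim: n v => [|n IH] [|b v] //=; rewrite mem_cat.
  by apply/negP => /orP[] /mapP[].
case: b; rewrite eqSS -IH.
  apply/orP/idP => [[]|h]; last by left; apply/mapP; exists v.
    by case/mapP => w wn [->].
  by case/mapP.
apply/orP/idP => [[]|h]; last by right; apply/mapP; exists v.
  by case/mapP.
by case/mapP => w wn [->].
Qed.

Lemma uniq_blists n : uniq (blists n).
Proof.
elim: n => [|n IH] //=; rewrite cat_uniq !map_inj_uniq // ?IH /=; last 2 first.
- by move=> a b [].
- by move=> a b [].
by rewrite andbT; apply/hasPn => v /mapP[w _ ->]; apply/negP => /mapP[].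
Qed.

Lemma prime_dvd_prod (r : nat) (qs : seq nat) (e : nat -> nat) : prime r ->
  (forall q, q \in qs -> prime q) -> (r %| \prod_(q <- qs) q ^ e q)%N -> r \in qs.
Proof.
move=> pr; elim: qs => [|q qs IH] hq; first by rewrite big_nil dvdn1 => /eqP r1; rewrite r1 in pr.
rewrite big_cons Euclid_dvdM // => /orP[|h].
  rewrite Euclid_dvdX // => /andP[h _].
  by rewrite in_cons -(dvdn_prime2 pr (hq q (mem_head _ _))) h.
by rewrite in_cons IH ?orbT // => q' q's; apply: hq; rewrite in_cons q's orbT.
Qed.

Lemma dvd_prod_mem (r : nat) (qs : seq nat) (e : nat -> nat) : r \in qs ->
  (r ^ e r %| \prod_(q <- qs) q ^ e q)%N.
Proof. by move=> h; rewrite (big_rem r) //= dvdn_mulr. Qed.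

Section Core.
Variable D : nat.
Hypothesis D1 : (1 < D)%N.
Hypothesis Dsf : squarefree D.
Hypothesis Dmod : (((- D%:Z) %% 4)%Z == 2) || (((- D%:Z) %% 4)%Z == 3).

Definition nz (x : int * int) : int := x.1 ^+ 2 + D%:Z * x.2 ^+ 2.
Definition prim (x : int * int) := forall q : nat, prime q ->
  (q%:Z %| x.1)%Z -> (q%:Z %| x.2)%Z -> False.
Definition sol (x : int * int) (c : nat) := nz x = (c%:Z) ^+ 2 /\ prim x.
Definition mulZ (x y : int * int) : int * int :=
  (x.1 * y.1 - D%:Z * x.2 * y.2, x.1 * y.2 + x.2 * y.1).
Definition conjZ (x : int * int) : int * int := (x.1, - x.2).
Definition negZ (x : int * int) : int * int := (- x.1, - x.2).
Definition rel (p : nat) (x y : int * int) := (p%:Z %| x.1 * y.2 - y.1 * x.2)%Z.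

Lemma F1 x c p : sol x c -> prime p -> (p %| c)%N -> ~~ (p%:Z %| x.2)%Z.
Proof.
move=> [hn hp] pp pc; apply/negP => p2.
apply: (hp p pp) => //.
have e : x.1 ^+ 2 = c%:Z ^+ 2 - D%:Z * x.2 ^+ 2 by rewrite -hn /nz; ring.
rewrite -dvdzX2 // e rpredB //.
  by rewrite dvdzX2.
by rewrite dvdz_mull // dvdzX2.
Qed.

Lemma F2 x c p : sol x c -> prime p -> (p %| c)%N -> ~~ (p %| D)%N.
Proof.
move=> [hn hp] pp pc; apply/negP => pD.
have e : x.1 ^+ 2 = c%:Z ^+ 2 - D%:Z * x.2 ^+ 2 by rewrite -hn /nz; ring.
have p1 : (p%:Z %| x.1)%Z.
  by rewrite -dvdzX2 // e rpredB ?dvdz_mulr // dvdzX2.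
have e2 : D%:Z * x.2 ^+ 2 = c%:Z ^+ 2 - x.1 ^+ 2 by rewrite -hn /nz; ring.
have h2 : (p%:Z ^+ 2 %| D%:Z * x.2 ^+ 2)%Z.
  by rewrite e2 rpredB // dvdz_exp2r.
have cop : coprimez (p%:Z ^+ 2) (x.2 ^+ 2).
  by apply: coprimezXl; apply: coprimezXr; rewrite coprimez_primeP // (F1 (conj hn hp)).
rewrite Gauss_dvdzl // dvdzE abszX /= in h2.
by move: (Dsf pp); rewrite h2.
Qed.

Lemma F3 x c p : sol x c -> prime p -> (p %| c)%N -> ~~ (p%:Z %| x.1)%Z.
Proof.
move=> hs pp pc; apply/negP => p1.
have e2 : D%:Z * x.2 ^+ 2 = c%:Z ^+ 2 - x.1 ^+ 2 by rewrite -hs.1 /nz; ring.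
have : (p%:Z %| D%:Z * x.2 ^+ 2)%Z by rewrite e2 rpredB // dvdzX2.
rewrite dvdzPM // dvdzX2 // => /orP[].
  by move: (F2 hs pp pc) => /negP.
by move: (F1 hs pp pc) => /negP.
Qed.

Lemma odd_intP (x : int) : ~~ (2%:Z %| x)%Z -> exists k, x = 2 * k + 1.
Proof.
move=> h; exists (x %/ 2)%Z.
have e := divz_eq x 2.
have h0 : (0 <= x %% 2)%Z by apply: modz_ge0.
have h1 : (x %% 2 < 2)%Z by apply: ltz_pmod.
have h2 : (x %% 2)%Z != 0 by apply/negP => /eqP/dvdz_mod0P; move/negP: h.
lia.
Qed.

Lemma F4 x c : sol x c -> ~~ (2 %| c)%N.
Proof.
move=> hs; apply/negP => c2.
have [k ek] := odd_intP (F3 hs (isT : prime 2) c2).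
have [l el] := odd_intP (F1 hs (isT : prime 2) c2).
case/dvdnP: c2 => m em.
have := hs.1; rewrite /nz ek el em => e.
rewrite PoszM in e.
have e' : - D%:Z = (- (m%:Z ^+ 2 - k ^+ 2 - k - D%:Z * (l ^+ 2 + l))) * 4 + 1.
  by apply: (eq_lc (k := -1) e); ring.
move: Dmod; rewrite e' modzMDl modz_small //.
Qed.


Lemma nz_mul x y : nz (mulZ x y) = nz x * nz y.
Proof. rewrite /nz /mulZ /=; ring. Qed.

Lemma mulZC x y : mulZ x y = mulZ y x.
Proof. rewrite /mulZ; congr pair; ring. Qed.

Lemma mulZA x y z : mulZ x (mulZ y z) = mulZ (mulZ x y) z.
Proof. rewrite /mulZ /=; congr pair; ring. Qed.

Lemma rel_sym p x y : rel p x y -> rel p y x.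
Proof.
rewrite /rel; have -> : y.1 * x.2 - x.1 * y.2 = - (x.1 * y.2 - y.1 * x.2) by ring.
by rewrite rpredN.
Qed.

Lemma rel_refl p x : rel p x x.
Proof. by rewrite /rel subrr dvdz0. Qed.

Lemma two_prime (p : nat) : prime p -> (p%:Z %| 2)%Z -> p = 2%N.
Proof. by move=> pp; rewrite dvdzE /= dvdn_prime2 // => /eqP. Qed.

Lemma rel_trans p x y z c : sol y c -> prime p -> (p %| c)%N ->
  rel p x y -> rel p y z -> rel p x z.
Proof.
move=> hs pp pc h1 h2.
have e : y.2 * (x.1 * z.2 - z.1 * x.2) =
  z.2 * (x.1 * y.2 - y.1 * x.2) + x.2 * (y.1 * z.2 - z.1 * y.2) by ring.
have : (p%:Z %| y.2 * (x.1 * z.2 - z.1 * x.2))%Z by rewrite e rpredD // dvdz_mull.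
rewrite dvdzPM // => /orP[] //.
by move: (F1 hs pp pc) => /negP.
Qed.

Lemma rel_mulZ p x z : (p%:Z %| nz x)%Z -> rel p (mulZ x z) x.
Proof.
move=> h; rewrite /rel /mulZ /=.
have -> : (x.1 * z.1 - D%:Z * x.2 * z.2) * x.2 - x.1 * (x.1 * z.2 + x.2 * z.1)
   = - (nz x * z.2) by rewrite /nz; ring.
by rewrite rpredN dvdz_mulr.
Qed.

Lemma rel_mulZr p x z : (p%:Z %| nz x)%Z -> rel p (mulZ z x) x.
Proof. by rewrite mulZC; apply: rel_mulZ. Qed.

Lemma rel_negl p x y : rel p (negZ x) y = rel p x y.
Proof.
rewrite /rel /negZ /=.
have -> : - x.1 * y.2 - y.1 * - x.2 = - (x.1 * y.2 - y.1 * x.2) by ring.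
by rewrite rpredN.
Qed.

Lemma rel_negr p x y : rel p x (negZ y) = rel p x y.
Proof.
rewrite /rel /negZ /=.
have -> : x.1 * - y.2 - - y.1 * x.2 = - (x.1 * y.2 - y.1 * x.2) by ring.
by rewrite rpredN.
Qed.

Lemma rel_conj p x y : rel p (conjZ x) (conjZ y) = rel p x y.
Proof.
rewrite /rel /conjZ /=.
have -> : x.1 * - y.2 - y.1 * - x.2 = - (x.1 * y.2 - y.1 * x.2) by ring.
by rewrite rpredN.
Qed.

Lemma dvd_nz x c p : sol x c -> (p %| c)%N -> (p%:Z %| nz x)%Z.
Proof. by move=> hs pc; rewrite hs.1 dvdz_exp. Qed.

Lemma dich x y c d p : sol x c -> sol y d -> prime p -> (p %| c)%N -> (p %| d)%N ->
  rel p x y \/ rel p x (conjZ y).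
Proof.
move=> hx hy pp pc pd.
have e : (x.1 * y.2 - y.1 * x.2) * - (x.1 * - y.2 - y.1 * x.2) =
   nz x * y.2 ^+ 2 - nz y * x.2 ^+ 2 by rewrite /nz; ring.
have : (p%:Z %| (x.1 * y.2 - y.1 * x.2) * - (x.1 * - y.2 - y.1 * x.2))%Z.
  by rewrite e rpredB // dvdz_mulr // ?(dvd_nz hx) ?(dvd_nz hy).
rewrite dvdzPM // rpredN => /orP[h|h]; [left|right] => //.
Qed.

Lemma notboth x y c d p : sol x c -> sol y d -> prime p -> (p %| c)%N -> (p %| d)%N ->
  rel p x y -> rel p x (conjZ y) -> False.
Proof.
move=> hx hy pp pc pd h1 h2.
have : (p%:Z %| 2 * (y.1 * x.2))%Z.
  have -> : 2 * (y.1 * x.2) = - ((x.1 * y.2 - y.1 * x.2) + (x.1 * - y.2 - y.1 * x.2)) by ring.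
  by rewrite rpredN rpredD.
rewrite !dvdzPM // => /orP[/(two_prime pp) p2|/orP[]].
- by move: (F4 hx); rewrite -p2 pc.
- by move: (F3 hy pp pd) => /negP.
- by move: (F1 hx pp pc) => /negP.
Qed.

Lemma sol_cop x y c d q : sol x c -> sol y d -> prime q -> (q %| c)%N -> (q %| d)%N ->
  rel q x y -> ~~ (q%:Z %| x.1 * y.2 + y.1 * x.2)%Z.
Proof.
move=> hx hy pp pc pd h1; apply/negP => h2.
apply: (notboth hx hy pp pc pd h1).
rewrite /rel /=; have -> : x.1 * - y.2 - y.1 * x.2 = - (x.1 * y.2 + y.1 * x.2) by ring.
by rewrite rpredN.
Qed.

Lemma dvd_mulZ (q : int) X Y : (q %| X.1)%Z -> (q %| X.2)%Z ->
  (q %| (mulZ X Y).1)%Z /\ (q %| (mulZ X Y).2)%Z.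
Proof.
move=> h1 h2; rewrite /mulZ /=; split.
  by apply: rpredB; [exact: dvdz_mulr | apply: dvdz_mulr; exact: dvdz_mull].
by apply: rpredD; [exact: dvdz_mulr | exact: dvdz_mulr].
Qed.

Lemma prim_mul x y c d : sol x c -> sol y d ->
  (forall q, prime q -> (q %| c)%N -> (q %| d)%N -> rel q x y) ->
  sol (mulZ x y) (c * d).
Proof.
move=> hx hy hr; split.
  by rewrite nz_mul hx.1 hy.1 PoszM exprMn.
move=> q pq h1 h2.
have hcd : (q %| c * d)%N.
  have : (q%:Z %| nz (mulZ x y))%Z.
    by rewrite /nz rpredD ?dvdz_mull // dvdzX2.
  by rewrite nz_mul hx.1 hy.1 -exprMn -PoszM dvdzX2.
have hc1 : (q %| c)%N -> (q %| d)%N -> False.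
  move=> qc qd; have hr' := hr q pq qc qd.
  have e : x.1 * y.2 + y.1 * x.2 = (mulZ x y).2 by rewrite /mulZ /=; ring.
  by move: (sol_cop hx hy pq qc qd hr'); rewrite e h2.
have key : forall (u v : int * int) (a b : nat), sol u a -> sol v b ->
   (q%:Z %| (mulZ u v).1)%Z -> (q%:Z %| (mulZ u v).2)%Z -> ~~ (q %| b)%N -> False.
  move=> u v a b hu hv k1 k2 nb.
  have e1 : (mulZ (mulZ u v) (conjZ v)).1 = nz v * u.1 by rewrite /nz /mulZ /conjZ /=; ring.
  have e2 : (mulZ (mulZ u v) (conjZ v)).2 = nz v * u.2 by rewrite /nz /mulZ /conjZ /=; ring.
  have [f1 f2] := dvd_mulZ (conjZ v) k1 k2.
  rewrite e1 in f1; rewrite e2 in f2.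
  have nb' : ~~ (q%:Z %| b%:Z)%Z := nb.
  rewrite hv.1 dvdzPM // dvdzX2 // (negPf nb') /= in f1.
  rewrite hv.1 dvdzPM // dvdzX2 // (negPf nb') /= in f2.
  exact: hu.2 q pq f1 f2.
move: hcd; rewrite Euclid_dvdM // => /orP[qc|qd].
  case qd: (q %| d)%N; first exact: hc1.
  by apply: (key x y c d hx hy h1 h2); rewrite qd.
case qc: (q %| c)%N; first exact: hc1.
apply: (key y x d c hy hx); rewrite ?qc //; by rewrite mulZC.
Qed.


Lemma sol_c0 x c : sol x c -> (0 < c)%N.
Proof.
case: c => // -[h hp].
have [h1 h2] : x.1 = 0 /\ x.2 = 0.
  move: h; rewrite /nz expr0n /= => h.
  have hD : 0 <= D%:Z by [].
  have a1 : 0 <= x.1 ^+ 2 by rewrite sqr_ge0.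
  have a2 : 0 <= x.2 ^+ 2 by rewrite sqr_ge0.
  have a3 : 0 <= D%:Z * x.2 ^+ 2 by rewrite mulr_ge0.
  have b1 : x.1 ^+ 2 = 0 by lia.
  have b2 : x.2 ^+ 2 = 0.
    have : D%:Z * x.2 ^+ 2 = 0 by lia.
    by move/eqP; rewrite mulf_eq0 => /orP[/eqP|/eqP] //; lia.
  by move/eqP: b1; move/eqP: b2; rewrite !sqrf_eq0 => /eqP -> /eqP ->.
by exfalso; apply: (hp 2 isT); rewrite ?h1 ?h2 dvdz0.
Qed.

Lemma solU x y c : sol x c -> sol y c ->
  (forall p, prime p -> (p %| c)%N -> rel p x y) -> y = x \/ y = negZ x.
Proof.
move=> hx hy hr.
have c0 := sol_c0 hx.
pose m := x.1 * y.2 - y.1 * x.2.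
pose k := x.1 * y.2 + y.1 * x.2.
have emk : m * k = c%:Z ^+ 2 * (y.2 ^+ 2 - x.2 ^+ 2).
  have -> : m * k = nz x * y.2 ^+ 2 - nz y * x.2 ^+ 2 by rewrite /m /k /nz; ring.
  rewrite hx.1 hy.1; ring.
have cop : coprimez (c%:Z ^+ 2) k.
  apply: coprimezXl; rewrite coprimezE /=; apply: nocommon => // q pq qc qk.
  by apply: (negP (sol_cop hx hy pq qc qc (hr q pq qc))).
have hm : (c%:Z ^+ 2 %| m)%Z.
  by rewrite -(Gauss_dvdzl m cop) emk dvdz_mulr.
case/dvdzP: hm => v ev.
pose n := x.1 * y.1 + D%:Z * x.2 * y.2.
have enm : n ^+ 2 + D%:Z * m ^+ 2 = (c%:Z ^+ 2) ^+ 2.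
  have -> : n ^+2 + D%:Z * m ^+ 2 = nz x * nz y by rewrite /n /m /nz; ring.
  by rewrite hx.1 hy.1; ring.
have hn : (c%:Z ^+ 2 %| n)%Z.
  rewrite -(dvdz_pexp2r _ _ (isT : (0 < 2)%N)).
  have -> : n ^+ 2 = (c%:Z ^+ 2) ^+ 2 * (1 - D%:Z * v ^+ 2).
    by apply: (eq_lc (k := 1) enm); rewrite ev; ring.
  exact: dvdz_mulr.
case/dvdzP: hn => u eu.
have cz : c%:Z ^+ 2 != 0 by rewrite expf_eq0 /= -lt0n c0.
have euv : u ^+ 2 + D%:Z * v ^+ 2 = 1.
  have e : (u ^+ 2 + D%:Z * v ^+ 2) * (c%:Z ^+ 2) ^+ 2 = 1 * (c%:Z ^+ 2) ^+ 2.
    by rewrite mul1r -{2}enm eu ev; ring.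
  exact: (mulIf (expf_neq0 2 cz) e).
have v0 : v = 0.
  have hD : 2 <= D%:Z by [].
  have a1 : 0 <= u ^+ 2 by rewrite sqr_ge0.
  case: (eqVneq v 0) => // /negPf vn.
  have a2 : 1 <= v ^+ 2.
    have : 0 < v ^+ 2 by rewrite exprn_even_gt0 // vn.
    lia.
  have a3 : 2 * 1 <= D%:Z * v ^+ 2 by apply: ler_pM.
  by have := lerD a1 a3; rewrite euv.
have u1 : u ^+ 2 = 1 by move: euv; rewrite v0 expr0n /= mulr0 addr0.
have ex1 : x.1 * c%:Z ^+ 2 = y.1 * n + D%:Z * y.2 * m.
  rewrite -hy.1 /nz /n /m; ring.
have ex2 : x.2 * c%:Z ^+ 2 = y.2 * n - y.1 * m.
  rewrite -hy.1 /nz /n /m; ring.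
have ex1' : x.1 * c%:Z ^+ 2 = (y.1 * u) * c%:Z ^+ 2 by rewrite ex1 ev eu v0; ring.
have ex2' : x.2 * c%:Z ^+ 2 = (y.2 * u) * c%:Z ^+ 2 by rewrite ex2 ev eu v0; ring.
have f1 := mulIf cz ex1'; have f2 := mulIf cz ex2'.
move/eqP: u1; rewrite sqrf_eq1 => /orP[]/eqP uu; rewrite uu in f1 f2;
  destruct x as [x1 x2]; destruct y as [y1 y2]; simpl in f1, f2; rewrite f1 f2.
  by left; rewrite !mulr1.
by right; rewrite /negZ /= !mulrN1 !opprK.
Qed.


Hypothesis Hcl : class_group_elem_2 D.

Lemma A0 (p : nat) (r : int) : prime p -> odd p -> ~~ (p %| D)%N ->
  (p%:Z ^+ 2 %| r ^+ 2 + D%:Z)%Z -> exists y, sol y p.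
Proof.
move=> pp op pD h2.
have h1 : (p%:Z %| r ^+ 2 + D%:Z)%Z.
  by apply: dvdz_trans h2; rewrite expr2 dvdz_mulr.
have eK := divzK h1; have eK2 := divzK h2.
set K := ((r ^+ 2 + D%:Z) %/ p%:Z)%Z in eK.
set K2 := ((r ^+ 2 + D%:Z) %/ p%:Z ^+ 2)%Z in eK2.
have cop : coprimez p%:Z (2 * r).
  rewrite coprimez_primeP // dvdzPM //; apply/norP; split.
    by apply/negP => /(two_prime pp) p2; rewrite p2 in op.
  apply/negP => pr.
  have : (p%:Z %| D%:Z)%Z.
    have -> : D%:Z = (r ^+ 2 + D%:Z) - r ^+ 2 by ring.
    by rewrite rpredB // dvdz_exp.
  by rewrite dvdzE /= (negPf pD).
pose f : qform := (p%:Z, 2 * r, K).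
pose h : qform := (p%:Z ^+ 2, 2 * r, K2).
have df : disc f = - 4 * D%:Z.
  rewrite /disc /fa /fb /fc /= -mulrA [p%:Z * _]mulrC eK; ring.
have dh : disc h = - 4 * D%:Z.
  rewrite /disc /fa /fb /fc /= -mulrA [p%:Z ^+ 2 * _]mulrC eK2; ring.
have fd : form_of_disc (- 4 * D%:Z) f.
  rewrite /form_of_disc /primitive_form /posdef df eqxx /fa /fb /fc /=.
  rewrite (eqP cop) gcd1z eqxx /= andbT.
  have : (0 < p)%N by apply: prime_gt0.
  have : (1 < D)%N := D1.
  lia.
have he : form_equiv f f.
  exists 1, 0, 0, 1; split; first by ring.
  by move=> x y; rewrite /feval; congr (_ + _ + _); congr (_ * _); ring.
have hc : dirichlet_composite f f h.
  have e2r : 2 * r + 2 * r = (2 * r) * 2 by ring.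
  rewrite /dirichlet_composite /fa /fb /fc /= dh df e2r; do !split => //.
  - exact: dvdz_mull.
  - by rewrite mulzK // gcdzz /= (eqP cop).
have [P [Q [R [S [det ev]]]]] := Hcl fd fd he hc.
have e10 : p%:Z ^+ 2 = P ^+ 2 + D%:Z * R ^+ 2.
  have e := ev 1 0; rewrite /feval /fa /fb /fc /= in e.
  by apply: (eq_lc (k := 1) e); ring.
exists (P, R); split; first by rewrite /nz /= e10.
move=> q pq /= qP qR.
have : (q%:Z %| P * S - Q * R)%Z by apply: rpredB; [exact: dvdz_mulr | exact: dvdz_mull].
by rewrite det dvdzE /= dvdn1 => /eqP q1; rewrite q1 in pq.
Qed.


Lemma odd_of_sol x c p : sol x c -> prime p -> (p %| c)%N -> odd p.
Proof.
move=> hs pp pc; case: (even_prime pp) => // p2.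
by move: (F4 hs); rewrite -p2 pc.
Qed.

Lemma root_of_sol x c p : sol x c -> prime p -> (p %| c)%N ->
  exists r, (p%:Z ^+ 2 %| r ^+ 2 + D%:Z)%Z.
Proof.
move=> hs pp pc.
have cop : coprimez x.2 (p%:Z ^+ 2).
  by rewrite coprimez_sym; apply: coprimezXl; rewrite coprimez_primeP // (F1 hs).
case/coprimezP: cop => [[u w]] /= e.
exists (x.1 * u).
have -> : (x.1 * u) ^+ 2 + D%:Z = u ^+ 2 * nz x + D%:Z * (1 - u * x.2) * (1 + u * x.2).
  rewrite /nz; ring.
have -> : 1 - u * x.2 = w * p%:Z ^+ 2 by rewrite -e; ring.
rewrite hs.1; apply: rpredD.
  by apply: dvdz_mull; apply: dvdz_exp2r.
by apply: dvdz_mulr; apply: dvdz_mull; apply: dvdz_mull.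
Qed.

Lemma solA x c p : sol x c -> prime p -> (p %| c)%N -> exists y, sol y p.
Proof.
move=> hs pp pc; have [r hr] := root_of_sol hs pp pc.
exact: (A0 pp (odd_of_sol hs pp pc) (F2 hs pp pc) hr).
Qed.

Lemma divstep x c s p : sol x c -> sol s p -> prime p -> (p %| c)%N -> rel p x s ->
  exists x', sol x' (c %/ p) /\ x = mulZ x' s.
Proof.
move=> hx hs pp pc hr.
have p0 : p%:Z ^+ 2 != 0 by rewrite expf_eq0 /= -lt0n prime_gt0.
pose mm := x.2 * s.1 - x.1 * s.2.
pose kk := x.1 * s.2 + s.1 * x.2.
pose R := x.1 * s.1 + D%:Z * x.2 * s.2.
have hk := sol_cop hx hs pp pc (dvdnn p) hr.
have [c' ec] := dvdnP pc.
have -> : (c %/ p = c')%N by rewrite ec mulnK // prime_gt0.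
have hx1 : nz x = (c'%:Z * p%:Z) ^+ 2 by rewrite hx.1 ec PoszM.
have hmk : (p%:Z ^+ 2 %| mm * kk)%Z.
  have -> : mm * kk = x.2 ^+ 2 * nz s - nz x * s.2 ^+ 2 by rewrite /mm /kk /nz; ring.
  rewrite hx.1 hs.1; apply: rpredB; first exact: dvdz_mull.
  by apply: dvdz_mulr; apply: dvdz_exp2r.
have cop : coprimez (p%:Z ^+ 2) kk.
  by apply: coprimezXl; rewrite coprimez_primeP.
rewrite Gauss_dvdzl // in hmk.
case/dvdzP: hmk => m' em.
have eR : R ^+ 2 + D%:Z * mm ^+ 2 = nz x * nz s by rewrite /R /mm /nz; ring.
have hR : (p%:Z ^+ 2 %| R)%Z.
  rewrite -(dvdz_pexp2r _ _ (isT : (0 < 2)%N)).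
  have -> : R ^+ 2 = (p%:Z ^+ 2) ^+ 2 * (c'%:Z ^+ 2 - D%:Z * m' ^+ 2).
    apply: (eq_lc (k := 1) eR); rewrite hx1 hs.1 em; ring.
  exact: dvdz_mulr.
case/dvdzP: hR => R' eR'.
have ex : x = mulZ (R', m') s.
  have e1 : x.1 * p%:Z ^+ 2 = (mulZ (R', m') s).1 * p%:Z ^+ 2.
    rewrite -{1}hs.1 /mulZ /=.
    have -> : (R' * s.1 - D%:Z * m' * s.2) * p%:Z ^+ 2 = R * s.1 - D%:Z * mm * s.2.
      by rewrite eR' em; ring.
    rewrite /R /mm /nz; ring.
  have e2 : x.2 * p%:Z ^+ 2 = (mulZ (R', m') s).2 * p%:Z ^+ 2.
    rewrite -{1}hs.1 /mulZ /=.
    have -> : (R' * s.2 + m' * s.1) * p%:Z ^+ 2 = R * s.2 + mm * s.1.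
      by rewrite eR' em; ring.
    rewrite /R /mm /nz; ring.
  have f1 := mulIf p0 e1; have f2 := mulIf p0 e2.
  by destruct x; simpl in f1, f2; rewrite f1 f2.
exists (R', m'); split => //; split.
  apply: (mulIf (expf_neq0 2 p0)).
  have -> : nz (R', m') * (p%:Z ^+ 2) ^+ 2 = R ^+ 2 + D%:Z * mm ^+ 2.
    by rewrite /nz /= eR' em; ring.
  rewrite eR hx1 hs.1; ring.
move=> q pq h1 h2.
have [k1 k2] := dvd_mulZ s h1 h2.
by apply: (hx.2 q pq); rewrite ex.
Qed.

Lemma gmulA x y z : gmul D x (gmul D y z) = gmul D (gmul D x y) z.
Proof. rewrite /gmul /=; congr pair; ring. Qed.
Lemma gmulC x y : gmul D x y = gmul D y x.
Proof. rewrite /gmul /=; congr pair; ring. Qed.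
Lemma gmul1 x : gmul D x gone = x.
Proof. by case: x => a b; rewrite /gmul /gone /=; congr pair; ring. Qed.
Lemma gmul1l x : gmul D gone x = x.
Proof. by rewrite gmulC gmul1. Qed.
Lemma gmulV x : inGD D x -> gmul D x (ginv x) = gone.
Proof.
rewrite /inGD /gmul /ginv /gone => h /=; congr pair; last by ring.
by apply: (eq_lc (k := 1) h); ring.
Qed.
Lemma gmulVl x : inGD D x -> gmul D (ginv x) x = gone.
Proof. by move=> h; rewrite gmulC gmulV. Qed.
Lemma ginvM x y : ginv (gmul D x y) = gmul D (ginv x) (ginv y).
Proof. rewrite /gmul /ginv /=; congr pair; ring. Qed.
Lemma ginvK x : ginv (ginv x) = x.
Proof. by case: x => a b; rewrite /ginv /= opprK. Qed.
Lemma ginv1 : ginv gone = gone.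
Proof. by rewrite /ginv /gone /= oppr0. Qed.
Lemma inGD_mul x y : inGD D x -> inGD D y -> inGD D (gmul D x y).
Proof.
rewrite /inGD /gmul /= => hx hy.
have -> : (x.1 * y.1 - D%:R * x.2 * y.2) ^+ 2 + D%:R * (x.1 * y.2 + x.2 * y.1) ^+ 2
  = (x.1 ^+ 2 + D%:R * x.2 ^+ 2) * (y.1 ^+ 2 + D%:R * y.2 ^+ 2) by ring.
by rewrite hx hy mul1r.
Qed.
Lemma inGD_inv x : inGD D x -> inGD D (ginv x).
Proof. by rewrite /inGD /ginv /= sqrrN. Qed.
Lemma inGD_one : inGD D gone.
Proof. by rewrite /inGD /gone /= expr0n /= mulr0 addr0 expr1n. Qed.
Lemma inGD_iter x n : inGD D x -> inGD D (iter n (gmul D x) gone).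
Proof. by move=> h; elim: n => [|n IH] /=; [exact: inGD_one | exact: inGD_mul]. Qed.
Lemma inGD_pow x z : inGD D x -> inGD D (gpow D x z).
Proof. by case: z => n h; rewrite /gpow; apply: inGD_iter => //; apply: inGD_inv. Qed.

Lemma gpowS x z : inGD D x -> gpow D x (z + 1) = gmul D x (gpow D x z).
Proof.
move=> h; case: z => [n|n].
  by have -> : Posz n + 1 = Posz n.+1 by lia.
case: n => [|k].
  by rewrite /= gmul1 gmulV.
have -> : Negz k.+1 + 1 = Negz k by rewrite !NegzE; lia.
by rewrite [in RHS]/= gmulA gmulV // gmul1l.
Qed.

Lemma gpowP x z : inGD D x -> gpow D x (z - 1) = gmul D (ginv x) (gpow D x z).
Proof.
move=> h; case: z => [n|n].
  case: n => [|k]; first by rewrite /= gmul1.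
  have -> : Posz k.+1 - 1 = Posz k by lia.
  by rewrite [in RHS]/= gmulA gmulVl // gmul1l.
have -> : Negz n - 1 = Negz n.+1 by rewrite !NegzE; lia.
by [].
Qed.

Lemma gpowD x m n : inGD D x -> gpow D x (m + n) = gmul D (gpow D x m) (gpow D x n).
Proof.
move=> h; case: m => [a|a].
  elim: a => [|a IH]; first by rewrite add0r /= gmul1l.
  have -> : Posz a.+1 + n = (Posz a + n) + 1 by lia.
  by rewrite gpowS // IH gmulA.
elim: a => [|a IH].
  have -> : Negz 0 + n = n - 1 by rewrite NegzE; lia.
  by rewrite gpowP //= gmul1.
have -> : Negz a.+1 + n = (Negz a + n) - 1 by rewrite !NegzE; lia.
by rewrite gpowP // IH gmulA.
Qed.

Lemma ginv_iter x n : ginv (iter n (gmul D x) gone) = iter n (gmul D (ginv x)) gone.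
Proof. by elim: n => [|n IH] /=; rewrite ?ginv1 // ginvM IH. Qed.

Lemma ginv_pow x z : ginv (gpow D x z) = gpow D x (- z).
Proof.
case: z => [[|k]|n].
- by rewrite /= ginv1.
- have -> : - Posz k.+1 = Negz k by rewrite NegzE.
  by rewrite /gpow ginv_iter.
- have -> : - Negz n = Posz n.+1 by rewrite NegzE opprK.
  by rewrite /gpow ginv_iter ginvK.
Qed.


Lemma gprod_cat s t : gprod D (s ++ t) = gmul D (gprod D s) (gprod D t).
Proof. by elim: s => [|p s IH] /=; rewrite ?gmul1l // IH gmulA. Qed.

Definition negL (s : seq ((rat * rat) * int)) := [seq (p.1, - p.2) | p <- s].

Lemma ginv_gprod s : ginv (gprod D s) = gprod D (negL s).
Proof. by elim: s => [|p s IH] /=; rewrite ?ginv1 // ginvM IH ginv_pow. Qed.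

Lemma inGD_gprod s : (forall p, p \in s -> inGD D p.1) -> inGD D (gprod D s).
Proof.
elim: s => [|p s IH] h /=; first exact: inGD_one.
apply: inGD_mul; first by apply: inGD_pow; apply: h; rewrite mem_head.
by apply: IH => q qs; apply: h; rewrite in_cons qs orbT.
Qed.

Fixpoint ex (t : seq ((rat * rat) * int)) (x : rat * rat) : int :=
  if t is p :: t' then (if p.1 == x then p.2 else 0) + ex t' x else 0.

Lemma ex_notin t x : x \notin [seq p.1 | p <- t] -> ex t x = 0.
Proof.
elim: t => [|p t IH] //=; rewrite in_cons negb_or => /andP[h1 h2].
by rewrite IH // eq_sym (negPf h1) addr0.
Qed.

Lemma ins l e x z : uniq l -> x \in l -> (forall y, y \in l -> inGD D y) ->
  gmul D (gpow D x z) (gprod D [seq (y, e y) | y <- l]) =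
  gprod D [seq (y, (if x == y then z else 0) + e y) | y <- l].
Proof.
elim: l => // y l IH /= /andP[yl ul]; rewrite in_cons => /predU1P[->|xl] hG.
  rewrite eqxx gmulA -gpowD; last by apply: hG; rewrite mem_head.
  congr (gmul D _ _); congr (gprod D _); apply/eq_in_map => y' y'l.
  by case: eqP => [ee|_]; [rewrite ee y'l in yl | rewrite add0r].
have xy : (x == y) = false by apply/negP => /eqP ee; move: yl; rewrite -ee xl.
rewrite xy add0r gmulA [gmul D (gpow D x z) _]gmulC -gmulA IH //.
by move=> y' y'l; apply: hG; rewrite in_cons y'l orbT.
Qed.

Lemma collapse t : (forall p, p \in t -> inGD D p.1) ->
  gprod D t = gprod D [seq (y, ex t y) | y <- undup [seq p.1 | p <- t]].
Proof.
elim: t => [|[x z] t IH] hG //=.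
rewrite IH; last by move=> p pt; apply: hG; rewrite in_cons pt orbT.
have hx : inGD D x by have := hG (x, z) (mem_head _ _).
case: ifP => xin.
  rewrite ins ?undup_uniq ?mem_undup //.
  move=> y; rewrite mem_undup => /mapP[p pt ->]; apply: hG.
  by rewrite in_cons pt orbT.
rewrite /= eqxx (ex_notin (negbT xin)) addr0; congr (gmul D _ _).
congr (gprod D _); apply/eq_in_map => y; rewrite mem_undup => yin.
by case: eqP => [ee|_]; [move: xin; rewrite ee yin | rewrite add0r].
Qed.


Lemma intr_natr (n : nat) : (n%:Z)%:~R = n%:R :> rat.
Proof. by []. Qed.

Definition qp (x : int * int) (c : nat) : rat * rat := (x.1%:~R / c%:R, x.2%:~R / c%:R).
Definition powZ (s : int * int) (n : nat) := iter n (mulZ s) (1, 0).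
Definition powE (s : int * int) (z : int) :=
  match z with Posz n => powZ s n | Negz n => powZ (conjZ s) n.+1 end.

Lemma qp_mul x y c d : qp (mulZ x y) (c * d) = gmul D (qp x c) (qp y d).
Proof.
rewrite /qp /gmul /mulZ /= natrM invfM; congr pair; rewrite ?intrD ?intrB ?intrM; ring.
Qed.

Lemma qp_conj x c : qp (conjZ x) c = ginv (qp x c).
Proof. by rewrite /qp /ginv /conjZ /= intrN mulNr. Qed.

Lemma qp_one : qp (1, 0) 1 = gone.
Proof. by rewrite /qp /gone /= divr1 mul0r. Qed.

Lemma qp_iter s p n : iter n (gmul D (qp s p)) gone = qp (powZ s n) (p ^ n).
Proof.
elim: n => [|n IH]; first by rewrite /= expn0 qp_one.
by rewrite /= IH -qp_mul expnS.
Qed.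

Lemma qp_pow s p z : gpow D (qp s p) z = qp (powE s z) (p ^ `|z|).
Proof.
case: z => n /=; first exact: qp_iter.
by rewrite -qp_conj qp_iter -qp_mul expnS.
Qed.

Lemma sol_one : sol (1, 0) 1.
Proof.
split; first by rewrite /nz /= expr0n /= mulr0 addr0 expr1n.
move=> q pq /=; rewrite dvdzE /= dvdn1 => /eqP q1 _.
by rewrite q1 in pq.
Qed.

Lemma sol_conj s c : sol s c -> sol (conjZ s) c.
Proof.
move=> [h1 h2]; split; first by rewrite /nz /conjZ /= sqrrN.
by move=> q pq /= a b; apply: (h2 q pq) => //; rewrite -rpredN.
Qed.

Lemma sol_powZ s p n : sol s p -> prime p ->
  sol (powZ s n) (p ^ n) /\ ((0 < n)%N -> rel p (powZ s n) s).
Proof.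
move=> hs pp; elim: n => [|n [IH1 IH2]]; first by split => //; rewrite expn0; exact: sol_one.
split; last first.
  move=> _; rewrite /powZ /=; apply: rel_mulZ; exact: dvd_nz hs (dvdnn p).
rewrite expnS; apply: (prim_mul hs IH1) => q pq qp qpn.
have qe : q = p by apply/eqP; rewrite -dvdn_prime2.
rewrite qe; apply: rel_sym; apply: IH2.
case: n IH1 qpn => // _; rewrite expn0 dvdn1 => /eqP q1.
by rewrite q1 in pq.
Qed.

Lemma sol_powE s p z : sol s p -> prime p -> sol (powE s z) (p ^ `|z|).
Proof.
move=> hs pp; case: z => n /=; first exact: (sol_powZ n hs pp).1.
exact: (sol_powZ n.+1 (sol_conj hs) pp).1.
Qed.

Lemma sol_inGD x c : sol x c -> inGD D (qp x c).
Proof.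
move=> hs; have c0 := sol_c0 hs.
have e : (nz x)%:~R = (c%:Z ^+ 2)%:~R :> rat by rewrite hs.1.
have cn : c%:R != 0 :> rat by rewrite pnatr_eq0 -lt0n.
rewrite /inGD /qp /=.
apply: (eq_lc (k := (c%:R ^+ 2)^-1) e).
rewrite /nz; field; exact: cn.
Qed.

Lemma coprime_c1 x c : sol x c -> coprimez c%:Z x.1.
Proof.
move=> hs; rewrite coprimezE /=; apply: nocommon; first exact: sol_c0 hs.
move=> q pq qc qx; move: (F3 hs pq qc) => /negP; apply.
exact: qx.
Qed.

Lemma qp_inj x y c d : sol x c -> sol y d -> qp x c = qp y d -> c = d /\ x = y.
Proof.
move=> hx hy [e1 e2].
have c0 := sol_c0 hx; have d0 := sol_c0 hy.
have cn : c%:R != 0 :> rat by rewrite pnatr_eq0 -lt0n.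
have dn : d%:R != 0 :> rat by rewrite pnatr_eq0 -lt0n.
have f1 : x.1 * d%:Z = y.1 * c%:Z.
  by move/eqP: e1; rewrite eqr_div // -!intr_natr -!intrM eqr_int => /eqP.
have f2 : x.2 * d%:Z = y.2 * c%:Z.
  by move/eqP: e2; rewrite eqr_div // -!intr_natr -!intrM eqr_int => /eqP.
have cd : (c %| d)%N.
  have : (c%:Z %| x.1 * d%:Z)%Z by rewrite f1 dvdz_mull.
  by rewrite Gauss_dvdzr // coprime_c1.
have dc : (d %| c)%N.
  have : (d%:Z %| y.1 * c%:Z)%Z by rewrite -f1 dvdz_mull.
  by rewrite Gauss_dvdzr // coprime_c1.
have ecd : c = d by apply/eqP; rewrite eqn_dvd cd dc.
split => //; rewrite ecd in f1 f2.
have dz : d%:Z != 0 by rewrite -lt0n.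
have g1 := mulIf dz f1; have g2 := mulIf dz f2.
by destruct x; destruct y; simpl in g1, g2; rewrite g1 g2.
Qed.


Lemma abs_sq (x : int) : (`|x|%N%:Z) ^+ 2 = x ^+ 2.
Proof. by rewrite abszE real_normK // num_real. Qed.

Definition pickab (p : nat) : option ('I_p.+1 * 'I_p.+1) :=
  [pick ab : 'I_p.+1 * 'I_p.+1 |
    (((ab.1 : nat) ^ 2 + D * (ab.2 : nat) ^ 2 == p ^ 2)%N && (0 < ab.2)%N)].
Definition pi (p : nat) : int * int :=
  if pickab p is Some ab then ((ab.1 : nat)%:Z, (ab.2 : nat)%:Z) else (1, 0).
Definition hasSol (p : nat) := exists y, sol y p.

Lemma natsol_sol (a b p : nat) : prime p -> (a ^ 2 + D * b ^ 2 = p ^ 2)%N -> (0 < b)%N ->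
  sol (a%:Z, b%:Z) p.
Proof.
move=> pp e b0; split.
  have e' : (a ^ 2 + D * b ^ 2)%:R = (p ^ 2)%:R :> int by rewrite e.
  by rewrite natrD natrM !natrX !natz in e'; rewrite /nz /=.
move=> q pq qa qb.
have qa' : (q %| a)%N := qa; have qb' : (q %| b)%N := qb.
have : (q ^ 2 %| p ^ 2)%N.
  by rewrite -e; apply: dvdn_add; [exact: dvdn_exp2r | apply: dvdn_mull; exact: dvdn_exp2r].
rewrite dvdn_pexp2r // dvdn_prime2 // => /eqP qp.
rewrite qp in qb'.
have h0 : (p <= b)%N by apply: dvdn_leq.
have h1 : (p ^ 2 <= b ^ 2)%N by rewrite leq_exp2r.
have h2 : (2 * b ^ 2 <= D * b ^ 2)%N by rewrite leq_mul2r D1 orbT.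
have h3 : (0 < p ^ 2)%N by rewrite expn_gt0 prime_gt0.
exact: (natsol_arith e h1 h2 h3).
Qed.

Lemma pi_sol p : prime p -> hasSol p -> sol (pi p) p.
Proof.
move=> pp [y hy]; rewrite /pi /pickab; case: pickP => [ab /andP[/eqP e b0] | none].
  exact: natsol_sol.
exfalso.
pose a := `|y.1|%N; pose b := `|y.2|%N.
have e : (a ^ 2 + D * b ^ 2 = p ^ 2)%N.
  have : (a ^ 2 + D * b ^ 2)%:R = (p ^ 2)%:R :> int.
    by rewrite natrD natrM !natrX !natz /a /b !abs_sq; exact: hy.1.
  by move/eqP; rewrite eqr_nat => /eqP.
have b0 : (0 < b)%N.
  rewrite /b absz_gt0; apply/negP => /eqP y0.
  by move: (F1 hy pp (dvdnn p)); rewrite y0 dvdz0.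
have ha : (a < p.+1)%N.
  rewrite ltnS -(@leq_exp2r _ _ 2) // -e; exact: leq_addr.
have hb : (b < p.+1)%N.
  rewrite ltnS -(@leq_exp2r _ _ 2) // -e.
  apply: leq_trans (leq_addl _ _); rewrite leq_pmull //; exact: ltnW.
have := none (Ordinal ha, Ordinal hb).
by rewrite /= e eqxx b0.
Qed.

Definition Bset (x : rat * rat) : Prop := exists p, prime p /\ hasSol p /\ x = qp (pi p) p.

Lemma dec c x : sol x c -> exists u y, inU u /\ in_span D Bset y /\ qp x c = gmul D u y.
Proof.
move: x; elim/ltn_ind: c => c IH x hx.
have c0 := sol_c0 hx.
case: (ltngtP c 1) => [|c1|c1].
- by rewrite ltnS leqn0 => /eqP c00; rewrite c00 in c0.
- pose p := pdiv c.
  have pp : prime p := pdiv_prime c1.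
  have pc : (p %| c)%N := pdiv_dvd c.
  have hs := solA hx pp pc.
  have hsig := pi_sol pp hs.
  have hB : Bset (qp (pi p) p) by exists p.
  have lt : (c %/ p < c)%N by rewrite ltn_Pdiv // prime_gt1.
  have ec : c = (c %/ p * p)%N by rewrite divnK.
  case: (dich hx hsig pp pc (dvdnn p)) => hr.
    have [x' [hx' ex]] := divstep hx hsig pp pc hr.
    have [u [y [hu [[s [hs' ey]] e]]]] := IH _ lt x' hx'.
    exists u, (gprod D ((qp (pi p) p, 1) :: s)); split => //; split.
      exists ((qp (pi p) p, 1) :: s); split => //.
      by move=> q; rewrite in_cons => /predU1P[-> //|]; exact: hs'.
    rewrite ex {1}ec qp_mul e /= -ey gmul1 -gmulA; congr (gmul D _ _); exact: gmulC.
  have [x' [hx' ex]] := divstep hx (sol_conj hsig) pp pc hr.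
  have [u [y [hu [[s [hs' ey]] e]]]] := IH _ lt x' hx'.
  exists u, (gprod D ((qp (pi p) p, Negz 0) :: s)); split => //; split.
    exists ((qp (pi p) p, Negz 0) :: s); split => //.
    by move=> q; rewrite in_cons => /predU1P[-> //|]; exact: hs'.
  rewrite ex {1}ec qp_mul e qp_conj /= -ey gmul1 -gmulA; congr (gmul D _ _); exact: gmulC.
- have hx1 := hx.1; rewrite c1 /nz in hx1.
  have x20 : x.2 = 0.
    case: (eqVneq x.2 0) => // /negPf vn; exfalso.
    have a1 : 0 <= x.1 ^+ 2 by rewrite sqr_ge0.
    have a2 : 1 <= x.2 ^+ 2.
      have : 0 < x.2 ^+ 2 by rewrite exprn_even_gt0 // vn.
      lia.
    have hD : 2 <= D%:Z by [].
    have a3 : 2 * 1 <= D%:Z * x.2 ^+ 2 by apply: ler_pM.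
    by have := lerD a1 a3; rewrite hx1.
  have x11 : x.1 ^+ 2 = 1 by move: hx1; rewrite x20 expr0n /= mulr0 addr0 expr1n.
  exists (qp x c), gone; split; last split.
  + move/eqP: x11; rewrite sqrf_eq1 c1 /qp x20 => /orP[]/eqP ->.
      by left; rewrite /gone divr1 mul0r.
    by right; rewrite /gneg1 divr1 mul0r.
  + by exists [::].
  + by rewrite gmul1.
Qed.


Lemma rep g : inGD D g -> exists x c, sol x c /\ g = qp x c.
Proof.
case: g => u v; rewrite /inGD /= => h.
have c0p : 0 < denq u * denq v by rewrite mulr_gt0 // denq_gt0.
have ea : (numq u * denq v)%:~R = u * (denq u * denq v)%:~R :> rat.
  by rewrite !intrM numqE; ring.
have eb : (numq v * denq u)%:~R = v * (denq u * denq v)%:~R :> rat.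
  by rewrite !intrM numqE; ring.
move: (numq u * denq v) (numq v * denq u) (denq u * denq v) ea eb c0p => a0 b0 c0 ea eb c0p.
have e0 : a0 ^+ 2 + D%:Z * b0 ^+ 2 = c0 ^+ 2.
  apply/eqP; rewrite -(eqr_int rat) !expr2 intrD !intrM intr_natr ea eb.
  apply/eqP; apply: (eq_lc (k := c0%:~R ^+ 2) h); ring.
pose g0 := gcdz a0 b0.
have g0n : g0 != 0.
  rewrite /g0 gcdz_eq0; apply/negP => /andP[/eqP a00 /eqP b00].
  move: e0; rewrite a00 b00 expr0n /= mulr0 addr0 => /esym/eqP.
  by rewrite sqrf_eq0 => /eqP c00; rewrite c00 in c0p.
have g0p : 0 < g0 by rewrite lt_def g0n /g0 /gcdz.
pose a := (a0 %/ g0)%Z; pose b := (b0 %/ g0)%Z.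
have ha : a0 = a * g0 by rewrite /a divzK // /g0 dvdz_gcdl.
have hb : b0 = b * g0 by rewrite /b divzK // /g0 dvdz_gcdr.
have e1 : c0 ^+ 2 = g0 ^+ 2 * (a ^+ 2 + D%:Z * b ^+ 2) by rewrite -e0 ha hb; ring.
have hc : (g0 %| c0)%Z.
  by rewrite -(dvdz_pexp2r _ _ (isT : (0 < 2)%N)) e1 dvdz_mulr.
pose c1 := (c0 %/ g0)%Z.
have hc1 : c0 = c1 * g0 by rewrite /c1 divzK.
have c1p : 0 < c1 by move: c0p; rewrite hc1 pmulr_lgt0.
have habs : (`|c1|%N)%:Z = c1 by rewrite gez0_abs // ltW.
exists (a, b), `|c1|%N; split; first split.
- rewrite /nz /= habs; apply: (mulIf (expf_neq0 2 g0n)).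
  have -> : (a ^+ 2 + D%:Z * b ^+ 2) * g0 ^+ 2 = c0 ^+ 2 by rewrite e1; ring.
  by rewrite hc1; ring.
- move=> q pq /= qa qb.
  have h1 : (q%:Z * g0 %| a0)%Z by rewrite ha dvdz_mul2r.
  have h2 : (q%:Z * g0 %| b0)%Z by rewrite hb dvdz_mul2r.
  have : (q%:Z * g0 %| gcdz a0 b0)%Z by rewrite dvdz_gcd h1 h2.
  rewrite -/g0 dvdzE abszM /= => hd.
  have g0a : (0 < `|g0|)%N by rewrite absz_gt0.
  exact: (not_mul_le (prime_gt1 pq) g0a (dvdn_leq g0a hd)).
- have c1n : c1%:~R != 0 :> rat by rewrite intr_eq0 gt_eqF.
  have g0n' : g0%:~R != 0 :> rat by rewrite intr_eq0.
  rewrite /qp /= -!intr_natr habs.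
  have fa : a%:~R * g0%:~R = (u * c1%:~R) * g0%:~R :> rat.
    by rewrite -intrM -ha ea hc1 intrM; ring.
  have fb : b%:~R * g0%:~R = (v * c1%:~R) * g0%:~R :> rat.
    by rewrite -intrM -hb eb hc1 intrM; ring.
  have fa' := mulIf g0n' fa; have fb' := mulIf g0n' fb.
  by rewrite fa' fb' !mulfK.
Qed.

Lemma NF l e : uniq l -> (forall x, x \in l -> Bset x) ->
  exists G c, sol G c /\ gprod D [seq (x, e x) | x <- l] = qp G c /\
   ((c = 1)%N -> G = (1, 0) /\ forall x, x \in l -> e x = 0) /\
   (forall q, prime q -> (q %| c)%N -> qp (pi q) q \in l).
Proof.
elim: l => [|x l IH] /=.
  move=> _ _; exists (1, 0), 1%N; split; first exact: sol_one.
  split; first by rewrite qp_one.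
  split => // q pq; rewrite dvdn1 => /eqP q1; by rewrite q1 in pq.
move=> /andP[xl ul] hB.
have [G' [c' [hG' [eG' [h1' h2']]]]] :
    exists G c, sol G c /\ gprod D [seq (x, e x) | x <- l] = qp G c /\
   ((c = 1)%N -> G = (1, 0) /\ forall x, x \in l -> e x = 0) /\
   (forall q, prime q -> (q %| c)%N -> qp (pi q) q \in l).
  by apply: IH => // y yl; apply: hB; rewrite in_cons yl orbT.
have [p [pp [hs ex]]] := hB x (mem_head _ _).
have hsig := pi_sol pp hs.
have qpe : forall q, prime q -> (q %| p ^ `|e x|)%N -> q = p.
  move=> q pq; rewrite Euclid_dvdX // => /andP[qp _].
  by apply/eqP; rewrite -dvdn_prime2.
exists (mulZ (powE (pi p) (e x)) G'), (p ^ `|e x| * c')%N.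
split.
  apply: (prim_mul (sol_powE (e x) hsig pp) hG') => q pq qpk qc.
  have := h2' q pq qc; rewrite (qpe q pq qpk) -ex => xl'.
  by rewrite xl' in xl.
split; first by rewrite eG' {1}ex qp_pow -qp_mul.
split.
  move/eqP; rewrite muln_eq1 => /andP[pk /eqP c1].
  have [G1 e0] := h1' c1.
  have ex0 : e x = 0.
    have k0 := pow_eq1 (prime_gt1 pp) pk.
    by apply/eqP; rewrite -absz_eq0 k0.
  split; first by rewrite ex0 G1 /= /mulZ /=; congr pair; ring.
  by move=> y; rewrite in_cons => /predU1P[->|yl] //; apply: e0.
move=> q pq; rewrite Euclid_dvdM // => /orP[qk|qc].
  by rewrite (qpe q pq qk) -ex mem_head.
by rewrite in_cons (h2' q pq qc) orbT.
Qed.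

Lemma sol_m1 : sol (-1, 0) 1.
Proof.
split; first by rewrite /nz /= expr0n /= mulr0 addr0 expr1n sqrrN expr1n.
move=> q pq /=; rewrite dvdzE /= dvdn1 => /eqP q1 _.
by rewrite q1 in pq.
Qed.

Lemma Bset_inGD x : Bset x -> inGD D x.
Proof. by move=> [p [pp [hs ->]]]; exact: sol_inGD (pi_sol pp hs). Qed.

Lemma span_neg1 t : (forall p, p \in t -> Bset p.1) -> gprod D t <> gneg1.
Proof.
move=> hB e.
have hG : forall p, p \in t -> inGD D p.1 by move=> p /hB; exact: Bset_inGD.
rewrite collapse // in e.
have hB' : forall x, x \in undup [seq p.1 | p <- t] -> Bset x.
  by move=> x; rewrite mem_undup => /mapP[p pt ->]; apply: hB.
have [G [c [hG' [eG [h1 _]]]]] := NF (ex t) (undup_uniq _) hB'.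
rewrite eG in e.
have e' : qp G c = qp (-1, 0) 1 by rewrite e /qp /gneg1 /= divr1 mul0r.
have [c1 G1] := qp_inj hG' sol_m1 e'.
have [G2 _] := h1 c1.
by move: G1; rewrite G2 => -[].
Qed.

Lemma GD_main : GD_is_U_times_free D.
Proof.
exists Bset; split; [|split; [|split]].
- exact: Bset_inGD.
- move=> s z us hB e x xs.
  have [G [c [hG [eG [h1 _]]]]] := NF z us hB.
  rewrite eG -qp_one in e.
  have [c1 _] := qp_inj hG sol_one e.
  exact: (h1 c1).2 x xs.
- move=> g hg; have [x [c [hx ->]]] := rep hg; exact: dec hx.
- move=> u u' y y' hu hu' [s [hs ey]] [s' [hs' ey']] e.
  have neg1_sq : gmul D gneg1 gneg1 = gone.
    by rewrite /gmul /gneg1 /gone /=; congr pair; ring.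
  have key : forall (s s' : seq ((rat * rat) * int)),
      (forall p, p \in s -> Bset p.1) -> (forall p, p \in s' -> Bset p.1) ->
      gprod D s = gmul D gneg1 (gprod D s') -> False.
    move=> t t' ht ht' et.
    have hG' : inGD D (gprod D t').
      by apply: inGD_gprod => p /ht'; exact: Bset_inGD.
    apply: (span_neg1 (t := t ++ negL t')).
      move=> p; rewrite mem_cat => /orP[/ht //|/mapP[q qt ->]] /=.
      exact: ht' q qt.
    by rewrite gprod_cat -ginv_gprod et -gmulA gmulV // gmul1.
  case: hu => hu; case: hu' => hu'; subst u u' y y'.
  + by rewrite !gmul1l in e.
  + by exfalso; rewrite gmul1l in e; exact: key s s' hs hs' e.
  + by exfalso; rewrite gmul1l in e; exact: key s' s hs' hs (esym e).
  + split => //.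
    have := congr1 (gmul D gneg1) e; rewrite !gmulA neg1_sq !gmul1l //.
Qed.


Definition sgp (b : bool) (q : nat) := if b then pi q else conjZ (pi q).
Fixpoint FF (c : nat) (qs : seq nat) (v : seq bool) : int * int :=
  if qs is q :: qs' then mulZ (powZ (sgp (head true v) q) (logn q c)) (FF c qs' (behead v))
  else (1, 0).
Definition goodp (c : nat) (qs : seq nat) :=
  forall q, q \in qs -> [/\ prime q, (q %| c)%N & hasSol q].

Lemma sol_sgp b q : prime q -> hasSol q -> sol (sgp b q) q.
Proof. by move=> pq hs; case: b; [exact: pi_sol | exact: sol_conj (pi_sol pq hs)]. Qed.

Lemma goodp_tail c q qs : goodp c (q :: qs) -> goodp c qs.
Proof. by move=> h r rs; apply: h; rewrite in_cons rs orbT. Qed.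

Lemma FF_sol c qs v : uniq qs -> goodp c qs ->
  sol (FF c qs v) (\prod_(q <- qs) q ^ logn q c).
Proof.
elim: qs v => [|q qs IH] v /=; first by rewrite big_nil => _ _; exact: sol_one.
move=> /andP[qn uq] hq; rewrite big_cons.
have [pq qc hsq] := hq q (mem_head _ _).
apply: prim_mul.
- exact: (sol_powZ _ (sol_sgp _ pq hsq) pq).1.
- exact: IH uq (goodp_tail hq).
- move=> r pr rq rP; exfalso.
  move: rq; rewrite Euclid_dvdX // => /andP[rq _].
  have rq' : r = q by apply/eqP; rewrite -dvdn_prime2.
  have hp : forall q', q' \in qs -> prime q'.
    by move=> q' q's; have [] := hq q'; rewrite ?in_cons ?q's ?orbT.
  by have := prime_dvd_prod pr hp rP; rewrite rq' (negPf qn).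
Qed.

Lemma rel_FF_head c q qs v : (0 < c)%N -> goodp c (q :: qs) ->
  rel q (FF c (q :: qs) v) (sgp (head true v) q).
Proof.
move=> c0 hq; have [pq qc hsq] := hq q (mem_head _ _).
have n0 : (0 < logn q c)%N by rewrite logn_gt0 mem_primes pq c0 qc.
have hsig := sol_sgp (head true v) pq hsq.
have [hP rP] := sol_powZ (logn q c) hsig pq.
rewrite /=; apply: (rel_trans hP pq _ _ (rP n0)).
  by rewrite dvdn_exp.
apply: rel_mulZ; apply: (dvd_nz hP); exact: dvdn_exp.
Qed.

Lemma FF_div_total c qs r : (0 < c)%N -> goodp c qs -> r \in qs ->
  (r %| \prod_(q <- qs) q ^ logn q c)%N.
Proof.
move=> c0 hq rs; have [pr rc hsr] := hq r rs.
apply: dvdn_trans (dvd_prod_mem _ rs).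
by apply: dvdn_exp => //; rewrite logn_gt0 mem_primes pr c0 rc.
Qed.

Lemma rel_FF_tail c q qs v r : (0 < c)%N -> uniq qs -> goodp c qs -> r \in qs ->
  rel r (FF c (q :: qs) v) (FF c qs (behead v)).
Proof.
move=> c0 uq hq rs.
rewrite /=; apply: rel_mulZr; apply: (dvd_nz (FF_sol (behead v) uq hq)).
exact: FF_div_total.
Qed.

Lemma FF_exist c qs x : (0 < c)%N -> sol x c -> uniq qs -> goodp c qs ->
  exists v, size v = size qs /\ forall q, q \in qs -> rel q x (FF c qs v).
Proof.
move=> c0 hx; elim: qs => [|q qs IH] /=; first by exists [::].
move=> /andP[qn uq] hq.
have [v' [sv' hv']] := IH uq (goodp_tail hq).
have [pq qc hsq] := hq q (mem_head _ _).
have hsig := pi_sol pq hsq.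
have [b hb] : exists b, rel q x (sgp b q).
  by case: (dich hx hsig pq qc (dvdnn q)) => h; [exists true | exists false].
exists (b :: v'); split; first by rewrite /= sv'.
move=> r; rewrite in_cons => /predU1P[->|rs].
  apply: (rel_trans (sol_sgp b pq hsq) pq (dvdnn q) hb).
  apply: rel_sym; exact: (rel_FF_head (b :: v') c0 hq).
have [pr rc hsr] := goodp_tail hq rs.
have hF := FF_sol v' uq (goodp_tail hq).
apply: (rel_trans hF pr (FF_div_total c0 (goodp_tail hq) rs) (hv' r rs)).
apply: rel_sym; exact: (rel_FF_tail q (b :: v') c0 uq (goodp_tail hq) rs).
Qed.

Lemma conjZK x : conjZ (conjZ x) = x.
Proof. by case: x => a b; rewrite /conjZ /= opprK. Qed.

Lemma FF_inj c qs v w : (0 < c)%N -> uniq qs -> goodp c qs ->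
  size v = size qs -> size w = size qs ->
  (forall q, q \in qs -> rel q (FF c qs v) (FF c qs w)) -> v = w.
Proof.
move=> c0; elim: qs v w => [|q qs IH] v w /=.
  by case: v => // ; case: w.
move=> /andP[qn uq] hq; case: v => // b v; case: w => // b' w /= [sv] [sw] hr.
have [pq qc hsq] := hq q (mem_head _ _).
have uqq : uniq (q :: qs) by rewrite /= qn uq.
have hTv := @FF_sol c (q :: qs) (b :: v) uqq hq.
have hTw := @FF_sol c (q :: qs) (b' :: w) uqq hq.
have qT : (q %| \prod_(q0 <- q :: qs) q0 ^ logn q0 c)%N.
  exact: (FF_div_total c0 hq (mem_head _ _)).
have h1 := rel_FF_head (b :: v) c0 hq.
have h2 := rel_FF_head (b' :: w) c0 hq.
have h3 := hr q (mem_head _ _).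
have hbb : rel q (sgp b q) (sgp b' q).
  apply: (rel_trans hTv pq qT (rel_sym h1)).
  exact: (rel_trans hTw pq qT h3 h2).
have ebb : b = b'.
  have hsig := pi_sol pq hsq.
  destruct b; destruct b'; rewrite /sgp in hbb => //; exfalso.
    exact: (notboth hsig hsig pq (dvdnn q) (dvdnn q) (rel_refl _ _) hbb).
  have hbb' : rel q (pi q) (conjZ (pi q)).
    by rewrite -rel_conj conjZK; exact: hbb.
  exact: (notboth hsig hsig pq (dvdnn q) (dvdnn q) (rel_refl _ _) hbb').
rewrite ebb; congr (_ :: _); apply: IH => // [|r rs]; first exact: goodp_tail hq.
have hq' := goodp_tail hq.
have [pr rc hsr] := hq' r rs.
have rT : (r %| \prod_(q0 <- q :: qs) q0 ^ logn q0 c)%N.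
  by apply: (FF_div_total c0 hq); rewrite in_cons rs orbT.
have t1 := rel_FF_tail q (b :: v) c0 uq hq' rs.
have t2 := rel_FF_tail q (b' :: w) c0 uq hq' rs.
apply: (rel_trans hTv pr rT (rel_sym t1)).
have hrr : r \in q :: qs by rewrite in_cons rs orbT.
exact: (rel_trans hTw pr rT (hr r hrr) t2).
Qed.


Definition absP (x : int * int) : nat * nat := (`|x.1|%N, `|x.2|%N).

Lemma abs_eq_pm (a b : int) : `|a|%N = `|b|%N -> a = b \/ a = - b.
Proof.
move=> h; have e : a ^+ 2 = b ^+ 2 by rewrite -abs_sq h abs_sq.
have e2 : (a - b) * (a + b) = a ^+ 2 - b ^+ 2 by ring.
have : (a - b) * (a + b) == 0 by rewrite e2 e subrr.
rewrite mulf_eq0 => /orP[/eqP h1|/eqP h2]; [left|right].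
  by apply/eqP; rewrite -subr_eq0 h1.
by apply/eqP; rewrite -subr_eq0 opprK h2.
Qed.

Lemma absP_eq x y : absP x = absP y ->
  [\/ x = y, x = negZ y, x = conjZ y | x = negZ (conjZ y)].
Proof.
case: x y => [x1 x2] [y1 y2] [/abs_eq_pm h1 /abs_eq_pm h2].
rewrite /negZ /conjZ /=.
case: h1 => ->; case: h2 => ->.
- by constructor 1.
- by constructor 3.
- by constructor 4; rewrite opprK.
- by constructor 2.
Qed.

Lemma absP_neg x : absP (negZ x) = absP x.
Proof. by rewrite /absP /negZ /= !abszN. Qed.

Lemma absP_conj x : absP (conjZ x) = absP x.
Proof. by rewrite /absP /conjZ /= abszN. Qed.

Lemma conjZ_mul x y : conjZ (mulZ x y) = mulZ (conjZ x) (conjZ y).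
Proof. rewrite /conjZ /mulZ /=; congr pair; ring. Qed.

Lemma conjZ_pow s n : conjZ (powZ s n) = powZ (conjZ s) n.
Proof.
elim: n => [|n IH]; first by rewrite /powZ /conjZ /= oppr0.
by rewrite /powZ /= conjZ_mul; congr (mulZ _ _); exact: IH.
Qed.

Lemma FF_conj c qs v : size v = size qs -> conjZ (FF c qs v) = FF c qs (map negb v).
Proof.
elim: qs v => [|q qs IH] [|b v] //=.
move=> [sv]; rewrite conjZ_mul conjZ_pow IH //; congr (mulZ (powZ _ _) _).
by case: b; rewrite /sgp /= ?conjZK.
Qed.

Lemma normsol_sol a b c : normalized_sol D a b c -> sol (a%:Z, b%:Z) c.
Proof.
case/andP => /eqP e /eqP g; split.
  have e' : (a ^ 2 + D * b ^ 2)%:R = (c ^ 2)%:R :> int by rewrite e.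
  by rewrite natrD natrM !natrX !natz in e'; rewrite /nz /=.
move=> q pq qa qb.
have qa' : (q %| a)%N := qa; have qb' : (q %| b)%N := qb.
have : (q ^ 2 %| c ^ 2)%N.
  by rewrite -e; apply: dvdn_add; [exact: dvdn_exp2r | apply: dvdn_mull; exact: dvdn_exp2r].
rewrite dvdn_pexp2r // => qc.
have : (q %| gcdn (gcdn a b) c)%N by rewrite !dvdn_gcd qa' qb' qc.
by rewrite g dvdn1 => /eqP q1; rewrite q1 in pq.
Qed.

Lemma sol_normsol x c : sol x c -> normalized_sol D `|x.1|%N `|x.2|%N c.
Proof.
move=> hx; apply/andP; split.
  have : (`|x.1|%N ^ 2 + D * `|x.2|%N ^ 2)%:R = (c ^ 2)%:R :> int.
    by rewrite natrD natrM !natrX !natz !abs_sq; exact: hx.1.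
  by move/eqP; rewrite eqr_nat.
rewrite gcdnC; apply: (nocommon (sol_c0 hx)) => q pq qc.
rewrite !dvdn_gcd => /andP[qa qb].
exact: (hx.2 q pq qa qb).
Qed.

Lemma prod_primes c : (0 < c)%N -> (\prod_(q <- primes c) q ^ logn q c)%N = c.
Proof.
move=> c0; symmetry; rewrite [X in X = _](prod_prime_decomp c0) prime_decompE big_map.
by [].
Qed.

Lemma hensel p t : prime p -> odd p -> ~~ (p %| D)%N -> (p%:Z %| t ^+ 2 + D%:Z)%Z ->
  exists r, (p%:Z ^+ 2 %| r ^+ 2 + D%:Z)%Z.
Proof.
move=> pp op pD ht.
have cop : coprimez (2 * t) p%:Z.
  rewrite coprimez_sym coprimez_primeP // dvdzPM //; apply/norP; split.
    by apply/negP => /(two_prime pp) p2; rewrite p2 in op.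
  apply/negP => pr.
  have : (p%:Z %| D%:Z)%Z.
    have -> : D%:Z = (t ^+ 2 + D%:Z) - t ^+ 2 by ring.
    by rewrite rpredB // dvdz_exp.
  by rewrite dvdzE /= (negPf pD).
case/coprimezP: cop => [[u w]] /= e.
case/dvdzP: ht => k ek.
exists (t - k * u * p%:Z).
have -> : (t - k * u * p%:Z) ^+ 2 + D%:Z
   = (t ^+ 2 + D%:Z) - k * p%:Z * (u * (2 * t)) + k ^+ 2 * u ^+ 2 * p%:Z ^+ 2 by ring.
have -> : u * (2 * t) = 1 - w * p%:Z by apply: (eq_lc (k := 1) e); ring.
rewrite ek.
have -> : k * p%:Z - k * p%:Z * (1 - w * p%:Z) + k ^+ 2 * u ^+ 2 * p%:Z ^+ 2
   = (k * w + k ^+ 2 * u ^+ 2) * p%:Z ^+ 2 by ring.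
exact: dvdz_mull.
Qed.

Lemma legendre_hasSol p : prime p -> odd p -> legendre (- D%:Z) p = 1 -> hasSol p.
Proof.
move=> pp op; rewrite /legendre; case: ifP => [_ //|hpd].
case: existsP => [[x hx] _|_ //].
have pD : ~~ (p %| D)%N by apply/negP => h; move: hpd; rewrite rpredN dvdzE /= h.
have ht : (p%:Z %| (x : nat)%:Z ^+ 2 + D%:Z)%Z.
  by move: hx; rewrite eqz_mod_dvd opprK.
have [r hr] := hensel pp op pD ht.
exact: A0 pp op pD hr.
Qed.

Lemma sol_legendre x c p : sol x c -> p \in primes c -> odd p /\ legendre (- D%:Z) p = 1.
Proof.
move=> hx; rewrite mem_primes => /and3P[pp _ pc].
split; first exact: odd_of_sol hx pp pc.
have pD := F2 hx pp pc.
have [r hr] := root_of_sol hx pp pc.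
have hr1 : (p%:Z %| r ^+ 2 + D%:Z)%Z by apply: dvdz_trans hr; rewrite expr2 dvdz_mulr.
have p0 : (0 < p%:Z) by rewrite ltz_nat prime_gt0.
have m0 : 0 <= (r %% p%:Z)%Z by apply: modz_ge0; rewrite gt_eqF.
have m1 : (r %% p%:Z < p%:Z)%Z by apply: ltz_pmod.
have ea : (`|(r %% p%:Z)%Z|%N)%:Z = (r %% p%:Z)%Z by rewrite gez0_abs.
have lt : (`|(r %% p%:Z)%Z| < p)%N by rewrite -ltz_nat ea.
rewrite /legendre.
have -> : (p%:Z %| - D%:Z)%Z = false by rewrite rpredN dvdzE /= (negPf pD).
have -> : [exists x0 : 'I_p, ((x0 : nat)%:Z ^+ 2 == - D%:Z %[mod p%:Z])%Z] = true.
  apply/existsP; exists (Ordinal lt); rewrite /= ea eqz_mod_dvd opprK.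
  have e := divz_eq r p%:Z.
  have -> : (r %% p%:Z)%Z ^+ 2 + D%:Z
     = (r ^+ 2 + D%:Z) - ((r %/ p%:Z)%Z * (2 * r - (r %/ p%:Z)%Z * p%:Z)) * p%:Z.
    by rewrite {1}(_ : (r %% p%:Z)%Z = r - (r %/ p%:Z)%Z * p%:Z); [ring | rewrite {2}e; ring].
  by rewrite rpredB // dvdz_mull.
by [].
Qed.


Lemma count_main c : (1 < c)%N ->
  (forall p : nat, p \in primes c -> odd p /\ legendre (- D%:Z) p = 1) ->
  exists s : seq (nat * nat), uniq s /\
    (forall a b : nat, normalized_sol D a b c <-> (a, b) \in s) /\
    size s = (2 ^ (size (primes c)).-1)%N.
Proof.
move=> c1 H.
have c0 : (0 < c)%N by apply: ltnW.
have hg : goodp c (primes c).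
  move=> q qin; have := qin; rewrite mem_primes => /and3P[pq _ qc].
  have [oq lq] := H q qin.
  by split => //; exact: legendre_hasSol pq oq lq.
have up := primes_uniq c.
have hsolF : forall v, sol (FF c (primes c) v) c.
  by move=> v; have := FF_sol v up hg; rewrite prod_primes.
have pin : pdiv c \in primes c by rewrite mem_primes pdiv_prime // c0 pdiv_dvd.
move: hg up hsolF; case eps: (primes c) => [|p1 rest]; first by rewrite eps in pin.
move=> hg up hsolF.
have hrelall : forall x v, sol x c ->
    (forall q, q \in p1 :: rest -> rel q x (FF c (p1 :: rest) v)) ->
    FF c (p1 :: rest) v = x \/ FF c (p1 :: rest) v = negZ x.
  move=> x v hx hr; apply: (solU hx (hsolF v)) => p pp pc.
  by apply: hr; rewrite -eps mem_primes pp c0 pc.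
pose s := [seq absP (FF c (p1 :: rest) (true :: v)) | v <- blists (size rest)].
exists s; split; [|split].
- rewrite map_inj_in_uniq ?uniq_blists // => v w vin win e.
  rewrite mem_blists in vin; rewrite mem_blists in win.
  have key : forall w', size w' = size (p1 :: rest) ->
     (FF c (p1 :: rest) (true :: v) = FF c (p1 :: rest) w' \/
      FF c (p1 :: rest) (true :: v) = negZ (FF c (p1 :: rest) w')) -> true :: v = w'.
    move=> w' sw' hh; apply: (FF_inj c0 up hg); [by rewrite /= (eqP vin) | exact: sw' | ].
    move=> q _; case: hh => ->; first exact: rel_refl.
    by rewrite rel_negl; exact: rel_refl.
  have sw : size (true :: w) = size (p1 :: rest) by rewrite /= (eqP win).
  have sw' : size (false :: map negb w) = size (p1 :: rest) by rewrite /= size_map (eqP win).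
  have hc : conjZ (FF c (p1 :: rest) (true :: w)) = FF c (p1 :: rest) (false :: map negb w).
    by rewrite FF_conj.
  case: (absP_eq e) => h.
  + by have := key _ sw (or_introl h) => -[].
  + by have := key _ sw (or_intror h) => -[].
  + by rewrite hc in h; have := key _ sw' (or_introl h).
  + by rewrite hc in h; have := key _ sw' (or_intror h).
- move=> a b; split.
    move=> hn; have hx := normsol_sol hn.
    have [v [sv hv]] := FF_exist c0 hx up hg.
    have eab : (a, b) = absP (FF c (p1 :: rest) v).
      by case: (hrelall _ v hx hv) => ->; rewrite ?absP_neg.
    case: v sv hv eab => // -[] v [sv] hv eab; apply/mapP.
      by exists v; rewrite ?mem_blists ?sv.
    exists (map negb v); first by rewrite mem_blists size_map sv.
    by rewrite eab -absP_conj FF_conj /= ?sv.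
  move=> /mapP[v _ e].
  have := sol_normsol (hsolF (true :: v)).
  by rewrite /absP in e; case: e => -> ->.
- by rewrite size_map size_blists.
Qed.

End Core.

Theorem theorem1p1 (D : nat) :
  (1 < D)%N -> squarefree D ->
  (((- D%:Z) %% 4)%Z == 2) || (((- D%:Z) %% 4)%Z == 3) ->
  class_group_elem_2 D ->
  GD_is_U_times_free D /\
  (forall c : nat, (1 < c)%N ->
     ((forall p : nat, p \in primes c -> odd p /\ legendre (- D%:Z) p = 1) ->
        exists s : seq (nat * nat), uniq s /\
          (forall a b : nat, normalized_sol D a b c <-> (a, b) \in s) /\
          size s = (2 ^ (size (primes c)).-1)%N) /\
     (~ (forall p : nat, p \in primes c -> odd p /\ legendre (- D%:Z) p = 1) ->
        forall a b : nat, ~~ normalized_sol D a b c)).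
Proof.
move=> D1 Dsf Dmod Hcl; split; first exact: GD_main.
move=> c c1; split; first exact: count_main.
move=> nH a b; apply/negP => hn; apply: nH => p pin.
exact: sol_legendre (normsol_sol hn) pin.
Qed.
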